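(* Let $G=(V,E)$ have $|V|=2$, let $N>3$, $\varepsilon=0$ and $s_0\in S_{nc}$. Then: (1) for every $\gamma\in(0,1)$, $\Gamma_N(G|s_0,\gamma,0)$ has at least one nonpositional trigger strategies profile; (2) $\Gamma_N(G|s_0,\gamma,0)$ has at least one positional trigger strategies profile if and only if $\gamma\in\left(0,\frac1{N-1}\right]$.
   Context: Setting. $G=(V,E)$ is a finite, simple, connected, undirected graph; $N\ge 3$ is an integer; $\gamma\in(0,1)$ and $\varepsilon\in[0,\frac1{N-1}]$ are parameters. There are $N$ tokens: cops $C_1,\dots,C_{N-1}$ (tokens $1,\dots,N-1$) and the robber $R$ (token $N$). A state is $s=(x^1,\dots,x^N,n)$ where $x^i\in V$ is the position of token $i$ and $n\in\{1,\dots,N\}$ is the token that moves next; $S^n$ denotes the set of states with token $n$ to move. A state is a capture state if $x^i=x^N$ for some $i\le N-1$; $S_{nc}$ is the set of noncapture states. In each turn exactly one token, the one to move, moves to a vertex of its closed neighbourhood (it may stay put); the order of moves is $C_1,C_2,\dots,C_{N-1},R,C_1,\dots$. Starting from an initial state $s_0\in S_{nc}$ at time $0$, the capture time is the first time $t$ at which a capture state occurs (infinite if never); after capture the game is over. Auxiliary games. For $m\in\{1,\dots,N\}$, $\Gamma_N^m(G|s_0,\gamma,\varepsilon)$ is the two-player zero-sum game in which player $P_m$ controls token $m$ and player $P_{-m}$ controls all other tokens, with the following payoff to $P_m$ ($P_{-m}$ receives its negative): $0$ if no capture ever occurs; if capture occurs at time $t$: for $m=N$, $-\gamma^t$; for $m\le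 N-1$, $\frac{1-\varepsilon}{K}\gamma^t$ if exactly $K\in\{1,\dots,N-2\}$ cops, including $C_m$, are on the robber's vertex, $\frac{\varepsilon}{N-K-1}\gamma^t$ if exactly $K\in\{1,\dots,N-2\}$ cops, not including $C_m$, are on the robber's vertex, and $\frac{\gamma^t}{N-1}$ if all $N-1$ cops are on the robber's vertex. $\Gamma^N_N$ is the modified cops-and-robber (CR) game. A pure positional strategy for token $n$ maps each state in $S^n\cap S_{nc}$ to an allowed next vertex. Each $\Gamma^m_N$ has optimal pure positional strategies (optimal from every initial state). For $m,n\in\{1,\dots,N\}$, $\phi^n_m$ denotes the strategy of token $n$ in a chosen pair of optimal pure positional strategies of $\Gamma^m_N$ (so $\phi^m_m$ is $P_m$'s optimal strategy and $(\phi^n_m)_{n\ne m}$ is $P_{-m}$'s). $\widehat\Sigma^n$ is the set of pure positional strategies of token $n$ that are components of optimal strategy pairs of $\Gamma^N_N$ (CR-optimal strategies). Trigger strategies. Given a choice of $(\phi^n_m)_{n,m}$, the trigger strategies profile $\bar\sigma=(\bar\sigma^1,\dots,\bar\sigma^N)$ of the $N$-player SCAR game $\Gamma_N(G|s_0,\gamma,\varepsilon)$ (same board and moves; player $n$ controls token $n$) is: token $n$, at current state $s$, plays $\phi^n_n(s)$ as long as every other player $m$ has followed $\phi^m_m$, and plays $\phi^n_m(s)$ from the moment a player $m\neq n$ deviates from $\phi^m_m$. Different choices of the optimal strategies give different trigger strategies profiles. $\bar\sigma$ is called positional if for all $n,m\in\{1,\dots,N\}$ there is $\widehat\sigma^n\in\widehat\Sigma^n$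 with $\phi^n_m(s)=\widehat\sigma^n(s)$ for every state $s\in S^n\cap S_{nc}$ reachable from $s_0$ by a finite sequence of legal moves passing only through noncapture states; otherwise $\bar\sigma$ is nonpositional. *)

(* Defs.v *)
From HB Require Import structures.
From mathcomp Require Import all_boot.
From Stdlib Require Import Reals ClassicalEpsilon.

Set Implicit Arguments.
Unset Strict Implicit.
Unset Printing Implicit Defensive.

Section SCAR.

Variables (V : finType) (e : rel V) (N : nat).

(* Tokens are 'I_N, 0-indexed: cops are 0..N-2 (C_1..C_{N-1}), robber is N-1. *)
Definition is_cop (i : 'I_N) : bool := (val i < N.-1)%N.
Definition is_robber (i : 'I_N) : bool := (val i == N.-1).

(* A state: positions of the N tokens and the token to move next. *)
Definition state : Type := ({ffun 'I_N -> V} * 'I_N)%type.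

Definition adjv (x y : V) : bool := (x == y) || e x y.

Definition cops_at (s : state) : {set 'I_N} :=
  [set i | is_cop i && [exists j, is_robber j && (s.1 i == s.1 j)]].

Definition capture (s : state) : bool := (0 < #|cops_at s|)%N.

(* next token in the cyclic order C_1, ..., C_{N-1}, R, C_1, ... *)
Definition next_tok (i : 'I_N) : 'I_N :=
  match insub (val i).+1 with
  | Some j => j
  | None => odflt i (insub 0%N)
  end.

Definition step (s : state) (v : V) : state :=
  ([ffun i => if i == s.2 then v else s.1 i], next_tok s.2).

(* General (history-dependent) pure strategy: past history, current state -> vertex. *)
Definition strategy : Type := seq state -> state -> V.

Definition legal_strat (n : 'I_N) (sg : strategy) : Prop :=
  forall p s, s.2 = n -> ~~ capture s -> adjv (s.1 n) (sg p s).

(* Pure positional strategy: current state -> vertex (only its values on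
   S^n \cap S_nc matter). *)
Definition legal_pos (n : 'I_N) (f : state -> V) : Prop :=
  forall s, s.2 = n -> ~~ capture s -> adjv (s.1 n) (f s).

Definition lift (f : state -> V) : strategy := fun _ s => f s.

(* The play generated by a strategy profile from s0: (past history, state at time t). *)
Fixpoint run (sg : 'I_N -> strategy) (s0 : state) (t : nat) : seq state * state :=
  match t with
  | 0 => ([::], s0)
  | t'.+1 => let ps := run sg s0 t' in
             (rcons ps.1 ps.2, step ps.2 (sg ps.2.2 ps.1 ps.2))
  end.

Variables (gamma eps : R).

(* payoff coefficient to P_m at a capture state (multiplied by gamma^t) *)
Definition coef (m : 'I_N) (s : state) : R :=
  let K := #|cops_at s| in
  if is_robber m then (-1)%R
  else if K == N.-1 then (/ INR (N - 1))%R
  else if m \in cops_at s then ((1 - eps) / INR K)%R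
  else (eps / INR (N - K - 1))%R.

Definition payoff (m : 'I_N) (sg : 'I_N -> strategy) (s0 : state) : R :=
  match excluded_middle_informative (exists t, capture (run sg s0 t).2) with
  | left H =>
      let t := @ex_minn (fun t => capture (run sg s0 t).2) H in
      (gamma ^ t * coef m (run sg s0 t).2)%R
  | right _ => 0%R
  end.

(* phi : token -> positional strategy is a pair of optimal pure positional
   strategies of Gamma^m_N (P_m: token m; P_{-m}: the other tokens),
   optimal from every noncapture initial state, against all pure strategies. *)
Definition optimal_pair (m : 'I_N) (phi : 'I_N -> state -> V) : Prop :=
  (forall n, legal_pos n (phi n)) /\
  forall s0 : state, ~~ capture s0 ->
  forall tau : 'I_N -> strategy, (forall n, legal_strat n (tau n)) ->
    (payoff m (fun n => if n == m then tau n else lift (phi n)) s0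
       <= payoff m (fun n => lift (phi n)) s0
     /\ payoff m (fun n => lift (phi n)) s0
       <= payoff m (fun n => if n == m then lift (phi n) else tau n) s0)%R.

Definition CR_optimal (n : 'I_N) (f : state -> V) : Prop :=
  exists (r : 'I_N) (psi : 'I_N -> state -> V),
    is_robber r /\ optimal_pair r psi /\ psi n = f.

(* A choice of (phi^n_m)_{n,m}, phi m n = phi^n_m, determining a trigger
   strategies profile. *)
Definition trigger_choice (phi : 'I_N -> 'I_N -> state -> V) : Prop :=
  forall m, optimal_pair m (phi m).

Inductive reachable (s0 : state) : state -> Prop :=
  | reach0 : reachable s0 s0
  | reachS s v : reachable s0 s -> ~~ capture s -> adjv (s.1 s.2) v ->
                 reachable s0 (step s v).

Definition positional_trigger (s0 : state) (phi : 'I_N -> 'I_N -> state -> V) : Prop :=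
  forall n m : 'I_N, exists f, CR_optimal n f /\
    forall s, reachable s0 s -> s.2 = n -> ~~ capture s -> phi m n s = f s.

End SCAR.

(* Main.v *)
Require Import Defs.
From HB Require Import structures.
From mathcomp Require Import all_boot.
From Stdlib Require Import Reals.
From mathcomp Require Import zify.
From Stdlib Require Import Lra ClassicalEpsilon.

Section SEC.
Variables (V : finType) (e : rel V) (N : nat).
Hypothesis V2 : #|V| = 2%N.
Hypothesis HN : (3 < N)%N.
Hypothesis e_irr : irreflexive e.
Hypothesis G_conn : forall x y : V, connect e x y.

Lemma two3 (x y z : V) : x != y -> z = x \/ z = y.
Proof.
move=> nxy. case: (eqVneq z x) => [->|nzx]; first by left.
case: (eqVneq z y) => [->|nzy]; first by right.
exfalso.
have U : uniq [:: x; y; z].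
  by rewrite /= !inE !negb_or nxy (eq_sym x z) nzx (eq_sym y z) nzy.
move/card_uniqP: U => /= H.
have := max_card (mem [:: x; y; z]). by rewrite H V2.
Qed.

Lemma adj_all (x y : V) : adjv e x y.
Proof.
rewrite /adjv. case: (eqVneq x y) => //= nxy.
have /connectP [p Hp Hl] := G_conn x y.
case: p Hp Hl => [|z p] /=; first by move=> _ E; rewrite E eqxx in nxy.
move=> /andP [exz _] _.
case: (@two3 x y z nxy) => E; subst z; last by [].
by rewrite e_irr in exz.
Qed.

Lemma Nm1 : (N.-1 < N)%N. Proof. lia. Qed.
Definition rob : 'I_N := Ordinal Nm1.
Lemma N0 : (0 < N)%N. Proof. lia. Qed.
Definition c0 : 'I_N := Ordinal N0.
Lemma N1 : (1 < N)%N. Proof. lia. Qed.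
Definition c1 : 'I_N := Ordinal N1.
Lemma Nm2 : (N.-2 < N)%N. Proof. lia. Qed.
Definition cm : 'I_N := Ordinal Nm2.

Lemma is_robberE (i : 'I_N) : is_robber i = (i == rob).
Proof. by rewrite /is_robber -val_eqE. Qed.

Lemma is_copE (i : 'I_N) : is_cop i = (i != rob).
Proof. rewrite /is_cop -val_eqE /=. have := ltn_ord i. lia. Qed.

Lemma next_tok_lt (i : 'I_N) : (val i < N.-1)%N -> val (next_tok i) = (val i).+1.
Proof.
move=> H. rewrite /next_tok. case: insubP => [k _ -> //| Hn].
exfalso. move: Hn. lia.
Qed.

Lemma next_tok_rob : next_tok rob = c0.
Proof.
rewrite /next_tok. case: insubP => [k Hk _ | _]; first by exfalso; move: Hk => /=; lia.
case: insubP => [k _ Hk | Hn] /=; first by apply: val_inj; rewrite Hk.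
exfalso; move: Hn; lia.
Qed.

Lemma in_cops_at (s : state V N) (i : 'I_N) :
  (i \in cops_at s) = is_cop i && (s.1 i == s.1 rob).
Proof.
rewrite /cops_at inE; congr andb.
apply/existsP/idP => [[j /andP [rj /eqP ->]]|H].
  by move: rj; rewrite is_robberE => /eqP ->.
by exists rob; rewrite is_robberE eqxx.
Qed.

Lemma noncapP (s : state V N) (i : 'I_N) : ~~ capture s -> is_cop i -> s.1 i != s.1 rob.
Proof.
move=> Hs Hi; apply/negP => E; move: Hs; rewrite /capture card_gt0.
move/negP; apply; apply/set0Pn; exists i; by rewrite in_cops_at Hi E.
Qed.

Lemma step_stay (s : state V N) : step s (s.1 s.2) = (s.1, next_tok s.2).
Proof.
congr pair; apply/ffunP => i; rewrite ffunE; by case: eqP => [->|].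
Qed.

Lemma capture_pos (p : {ffun 'I_N -> V}) (i j : 'I_N) : capture (p, i) = capture (p, j).
Proof. by []. Qed.

Lemma cops_cop_move (s : state V N) v : ~~ capture s -> is_cop s.2 -> v != s.1 s.2 ->
  cops_at (step s v) = [set s.2].
Proof.
move=> Hs Hc Hv.
have Hv' : v = s.1 rob.
  case: (@two3 _ _ v (@noncapP s _ Hs Hc)) => // E; by rewrite E eqxx in Hv.
have Hr : (rob == s.2) = false by move: Hc; rewrite is_copE eq_sym => /negbTE.
apply/setP => i; rewrite in_cops_at inE /step /= !ffunE Hr.
case: (eqVneq i s.2) => [->|nis]; first by rewrite Hc Hv' eqxx.
case Ci: (is_cop i) => //=. by rewrite (negbTE (@noncapP s _ Hs Ci)).
Qed.

Lemma cops_rob_move (s : state V N) v : ~~ capture s -> s.2 = rob -> v != s.1 rob ->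
  cops_at (step s v) = [set i | is_cop i].
Proof.
move=> Hs Hr Hv.
apply/setP => i; rewrite in_cops_at inE /step /= !ffunE Hr eqxx.
case Ci: (is_cop i) => //=.
have nir : (i == rob) = false by move: Ci; rewrite is_copE => /negbTE.
rewrite nir.
have Hi := @noncapP s i Hs Ci.
case: (@two3 _ _ (s.1 i) Hv) => E; first by apply/eqP.
by move/eqP: Hi.
Qed.

Lemma card_cops : #|[set i : 'I_N | is_cop i]| = N.-1.
Proof.
have -> : [set i : 'I_N | is_cop i] = [set~ rob].
  by apply/setP => i; rewrite !inE is_copE.
by rewrite cardsC1 card_ord.
Qed.

Lemma INR_pos k : (0 < k)%N -> (0 < INR k)%R.
Proof. move=> H; apply: lt_0_INR; apply/ltP; exact H. Qed.

Lemma coef_single (s : state V N) (k m : 'I_N) : cops_at s = [set k] ->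
  coef 0 m s = if m == rob then (-1)%R else if m == k then 1%R else 0%R.
Proof.
move=> H; rewrite /coef H cards1 is_robberE.
case: (m == rob) => //.
have -> : (1 == N.-1) = false by apply/negbTE; lia.
rewrite inE; case: (m == k) => /=.
  rewrite /Rdiv; simpl INR. field.
by rewrite /Rdiv Rmult_0_l.
Qed.

Lemma coef_all (s : state V N) (m : 'I_N) : cops_at s = [set i | is_cop i] ->
  m != rob -> coef 0 m s = (/ INR (N - 1))%R.
Proof.
move=> H nm; rewrite /coef H card_cops is_robberE (negbTE nm) eqxx //.
Qed.

Lemma coef_rob (s : state V N) : coef 0 rob s = (-1)%R.
Proof. by rewrite /coef is_robberE eqxx. Qed.

Lemma coef_cop_bd (s : state V N) (m : 'I_N) : capture s -> m != rob ->
  (0 <= coef 0 m s <= 1)%R.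
Proof.
move=> Hc nm; rewrite /coef is_robberE (negbTE nm).
case: eqP => [_|_].
  have H1 : (1 <= INR (N - 1))%R by apply: (le_INR 1); apply/leP; lia.
  split; first by apply: Rlt_le; apply: Rinv_0_lt_compat; lra.
  rewrite -Rinv_1; apply: Rinv_le_contravar; lra.
move: Hc; rewrite /capture => Hc.
case: ifP => _.
  have H1 : (1 <= INR #|cops_at s|)%R by apply: (le_INR 1); apply/leP; lia.
  rewrite Rminus_0_r /Rdiv Rmult_1_l.
  split; first by apply: Rlt_le; apply: Rinv_0_lt_compat; lra.
  rewrite -Rinv_1; apply: Rinv_le_contravar; lra.
rewrite /Rdiv Rmult_0_l; lra.
Qed.

Variable gamma : R.
Hypothesis Hg0 : (0 < gamma)%R.
Hypothesis Hg1 : (gamma < 1)%R.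

Lemma payoff_char (m : 'I_N) sg (s : state V N) t :
  (forall t', (t' < t)%N -> ~~ capture (run sg s t').2) -> capture (run sg s t).2 ->
  payoff gamma 0 m sg s = (gamma ^ t * coef 0 m (run sg s t).2)%R.
Proof.
move=> Hb Hc; rewrite /payoff.
case: excluded_middle_informative => [H|H]; last by exfalso; apply: H; exists t.
case: ex_minnP => t0 Ht0 Hmin.
have -> : t0 = t; last by [].
apply/eqP; rewrite eqn_leq Hmin //=. rewrite leqNgt; apply/negP => lt.
by have := Hb _ lt; rewrite Ht0.
Qed.

Lemma payoff_gen (m : 'I_N) sg (s : state V N) :
  payoff gamma 0 m sg s = 0%R \/ exists t,
   (forall t', (t' < t)%N -> ~~ capture (run sg s t').2) /\ capture (run sg s t).2 /\
   payoff gamma 0 m sg s = (gamma ^ t * coef 0 m (run sg s t).2)%R.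
Proof.
case: (classic (exists t, capture (run sg s t).2)) => [H|H].
  right. case: (ex_minnP H) => t0 Ht0 Hmin. exists t0.
  have Hb : forall t', (t' < t0)%N -> ~~ capture (run sg s t').2.
    move=> t' lt; apply/negP => C; have := Hmin _ C; rewrite leqNgt lt //.
  split; [exact Hb| split; [exact Ht0|]]. exact: payoff_char.
left; rewrite /payoff; case: excluded_middle_informative => // H'; by exfalso.
Qed.

Lemma pow_le1 d : (0 <= gamma ^ d <= 1)%R.
Proof. elim: d => [|d [IH1 IH2]] /=; first lra. split; nra. Qed.

Lemma pow_mono k t : (k <= t)%N -> (gamma ^ t <= gamma ^ k)%R.
Proof.
move/subnK => <-. rewrite pow_add. have [H1 H2] := pow_le1 (t - k).
have [H3 H4] := pow_le1 k. nra.
Qed.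

Lemma bound_cop (m : 'I_N) sg (s : state V N) k : m != rob ->
  (forall t', (t' < k)%N -> ~~ capture (run sg s t').2) ->
  (0 <= payoff gamma 0 m sg s <= gamma ^ k)%R.
Proof.
move=> nm Hb. have [H1 H2] := pow_le1 k.
case: (payoff_gen m sg s) => [->|[t [Hb' [Hc ->]]]]; first lra.
have kt : (k <= t)%N by rewrite leqNgt; apply/negP => lt; have := Hb _ lt; rewrite Hc.
have := pow_mono _ _ kt. have [H3 H4] := pow_le1 t. have [H5 H6] := coef_cop_bd _ m Hc nm.
nra.
Qed.

Lemma bound_rob sg (s : state V N) k :
  (forall t', (t' < k)%N -> ~~ capture (run sg s t').2) ->
  (- gamma ^ k <= payoff gamma 0 rob sg s <= 0)%R.
Proof.
move=> Hb. have [H1 H2] := pow_le1 k.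
case: (payoff_gen rob sg s) => [->|[t [Hb' [Hc ->]]]]; first lra.
have kt : (k <= t)%N by rewrite leqNgt; apply/negP => lt; have := Hb _ lt; rewrite Hc.
have := pow_mono _ _ kt. have [H3 H4] := pow_le1 t. rewrite coef_rob.
nra.
Qed.

Lemma runS sg (s : state V N) t : run sg s t.+1 =
  (rcons (run sg s t).1 (run sg s t).2,
   step (run sg s t).2 (sg (run sg s t).2.2 (run sg s t).1 (run sg s t).2)).
Proof. by []. Qed.

Lemma noncap_pos (s : state V N) j : ~~ capture s -> ~~ capture (s.1, j).
Proof. by case: s. Qed.

Lemma b1 sg (s : state V N) : ~~ capture s ->
  forall t', (t' < 1)%N -> ~~ capture (run sg s t').2.
Proof. by move=> Hs [|t'] //. Qed.

Lemma run1_stay sg (s : state V N) : sg s.2 [::] s = s.1 s.2 ->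
  run sg s 1 = ([:: s], (s.1, next_tok s.2)).
Proof. by move=> H; rewrite runS /= H step_stay. Qed.

Lemma b2 sg (s : state V N) : ~~ capture s -> sg s.2 [::] s = s.1 s.2 ->
  forall t', (t' < 2)%N -> ~~ capture (run sg s t').2.
Proof.
move=> Hs H [|[|t']] //. by rewrite run1_stay //; apply: noncap_pos.
Qed.

Lemma L_capt1 (m : 'I_N) sg (s : state V N) : ~~ capture s -> is_cop s.2 ->
  sg s.2 [::] s = s.1 rob ->
  payoff gamma 0 m sg s = (gamma * (if m == rob then -1 else if m == s.2 then 1 else 0))%R.
Proof.
move=> Hs Hc Hsg.
have Hv : s.1 rob != s.1 s.2 by rewrite eq_sym; apply: noncapP.
have Hca : cops_at (step s (s.1 rob)) = [set s.2] by apply: cops_cop_move.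
rewrite (@payoff_char _ _ _ 1); first last.
- by rewrite runS /= Hsg /capture Hca cards1.
- exact: b1.
by rewrite runS /= Hsg (coef_single _ _ m Hca) Rmult_1_r.
Qed.

Lemma L_jump (m : 'I_N) sg (s : state V N) : ~~ capture s -> s.2 = rob ->
  sg s.2 [::] s != s.1 rob ->
  payoff gamma 0 m sg s = (gamma * (if m == rob then -1 else / INR (N - 1)))%R.
Proof.
move=> Hs Hr Hsg.
have Hca := cops_rob_move _ _ Hs Hr Hsg.
rewrite (@payoff_char _ _ _ 1); first last.
- rewrite runS /= /capture Hca card_cops. lia.
- exact: b1.
rewrite runS /= Rmult_1_r. case: eqP => [->|/eqP nm]; first by rewrite coef_rob.
by rewrite (coef_all _ m Hca nm).
Qed.

Lemma L_stay2 (m : 'I_N) sg (s : state V N) : ~~ capture s ->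
  sg s.2 [::] s = s.1 s.2 -> is_cop (next_tok s.2) ->
  sg (next_tok s.2) [:: s] (s.1, next_tok s.2) = s.1 rob ->
  payoff gamma 0 m sg s =
    (gamma ^ 2 * (if m == rob then -1 else if m == next_tok s.2 then 1 else 0))%R.
Proof.
move=> Hs H1 Hc H2.
set s1 : state V N := (s.1, next_tok s.2).
have Hs1 : ~~ capture s1 by apply: noncap_pos.
have Hv : s1.1 rob != s1.1 s1.2 by rewrite eq_sym; apply: noncapP.
have Hca : cops_at (step s1 (s1.1 rob)) = [set s1.2] by apply: cops_cop_move.
rewrite (@payoff_char _ _ _ 2); first last.
- by rewrite runS run1_stay //= H2 /capture Hca cards1.
- exact: b2.
by rewrite runS run1_stay //= H2 (coef_single _ _ m Hca).
Qed.

Lemma L_stay3 (m : 'I_N) sg (s : state V N) : ~~ capture s ->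
  sg s.2 [::] s = s.1 s.2 ->
  sg (next_tok s.2) [:: s] (s.1, next_tok s.2) = s.1 (next_tok s.2) ->
  is_cop (next_tok (next_tok s.2)) ->
  sg (next_tok (next_tok s.2)) [:: s; (s.1, next_tok s.2)] (s.1, next_tok (next_tok s.2)) = s.1 rob ->
  payoff gamma 0 m sg s =
    (gamma ^ 3 * (if m == rob then -1 else if m == next_tok (next_tok s.2) then 1 else 0))%R.
Proof.
move=> Hs H1 H2 Hc H3.
set s1 : state V N := (s.1, next_tok s.2).
set s2 : state V N := (s.1, next_tok (next_tok s.2)).
have R2 : run sg s 2 = ([:: s; s1], s2).
  by rewrite runS run1_stay //= H2 (step_stay s1).
have Hs2 : ~~ capture s2 by apply: noncap_pos.
have Hv : s2.1 rob != s2.1 s2.2 by rewrite eq_sym; apply: noncapP.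
have Hca : cops_at (step s2 (s2.1 rob)) = [set s2.2] by apply: cops_cop_move.
rewrite (@payoff_char _ _ _ 3); first last.
- by rewrite runS R2 /= H3 /capture Hca cards1.
- move=> [|[|[|t']]] // _; last by rewrite R2.
  by rewrite run1_stay //; apply: noncap_pos.
by rewrite runS R2 /= H3 (coef_single _ _ m Hca).
Qed.

Definition F (s : state V N) : V := s.1 rob.
Definition Sst (s : state V N) : V := s.1 s.2.

Lemma legal_F n : legal_pos e n F.
Proof. move=> s _ _; exact: adj_all. Qed.

Lemma sgD (m n : 'I_N) (tau : 'I_N -> strategy V N) (phi : 'I_N -> state V N -> V) h (s : state V N) : n != m ->
  (fun k => if k == m then tau k else Defs.lift (phi k)) n h s = phi n s.
Proof. by move=> H /=; rewrite (negbTE H). Qed.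
Lemma sgO (m : 'I_N) (tau : 'I_N -> strategy V N) (phi : 'I_N -> state V N -> V) h (s : state V N) :
  (fun k => if k == m then Defs.lift (phi k) else tau k) m h s = phi m s.
Proof. by rewrite /= eqxx. Qed.

Lemma c0_cop : is_cop c0. Proof. rewrite /is_cop /=; lia. Qed.
Lemma c1_cop : is_cop c1. Proof. rewrite /is_cop /=; lia. Qed.
Lemma cm_cop : is_cop cm. Proof. rewrite /is_cop /=; lia. Qed.
Lemma c0_nr : c0 != rob. Proof. by rewrite -is_copE c0_cop. Qed.
Lemma c1_nr : c1 != rob. Proof. by rewrite -is_copE c1_cop. Qed.
Lemma cm_nr : cm != rob. Proof. by rewrite -is_copE cm_cop. Qed.
Lemma c01 : c0 != c1. Proof. by rewrite -val_eqE. Qed.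
Lemma cm0 : cm != c0. Proof. rewrite -val_eqE /=; lia. Qed.
Lemma cm1 : cm != c1. Proof. rewrite -val_eqE /=; lia. Qed.
Lemma next_c0 : next_tok c0 = c1.
Proof. apply: val_inj; rewrite next_tok_lt //=; lia. Qed.

Lemma g1 : (gamma ^ 1 = gamma)%R. Proof. by rewrite /= Rmult_1_r. Qed.


Lemma opt_cop_stay (m : 'I_N) phi : m != rob -> m != c0 ->
  (forall n s, phi n s = F s) -> optimal_pair e gamma 0 m phi.
Proof.
move=> Hm Hm0 Hphi; split; first by move=> n; move=> s _ _; rewrite Hphi; exact: adj_all.
move=> s Hs tau _.
have Gp := Hg0.
have Hm' : (rob == m) = false by rewrite eq_sym (negbTE Hm).
have Hm0' : (c0 == m) = false by rewrite eq_sym (negbTE Hm0).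
case: (eqVneq s.2 rob) => [Hr | Hnr].
- have Hnt : next_tok s.2 = c0 by rewrite Hr next_tok_rob.
  rewrite (@L_stay2 m (fun n => Defs.lift (phi n)) s Hs); try by (try unfold Defs.lift); rewrite /= ?Hnt ?Hr ?Hm' ?Hm0' ?Hphi /F ?eqxx ?c0_cop ?c1_cop ?cm_cop.
  rewrite (@L_stay2 m (fun k => if k == m then tau k else Defs.lift (phi k)) s Hs); try by (try unfold Defs.lift); rewrite /= ?Hnt ?Hr ?Hm' ?Hm0' ?Hphi /F ?eqxx ?c0_cop ?c1_cop ?cm_cop.
  rewrite Hnt (negbTE Hm) (negbTE Hm0).
  have := @bound_cop m (fun k => if k == m then Defs.lift (phi k) else tau k) s 0 Hm (fun t' H => False_ind _ (notF H)).
  lra.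
- have Hc : is_cop s.2 by rewrite is_copE.
  have Hnt := erefl s.2.
  case: (eqVneq s.2 m) => [Hsm | Hsm].
  + rewrite (@L_capt1 m (fun n => Defs.lift (phi n)) s Hs Hc); try by (try unfold Defs.lift); rewrite /= ?Hnt ?Hr ?Hm' ?Hm0' ?Hphi /F ?eqxx ?c0_cop ?c1_cop ?cm_cop.
    rewrite (@L_capt1 m (fun k => if k == m then Defs.lift (phi k) else tau k) s Hs Hc); try by (try unfold Defs.lift); rewrite /= Hsm eqxx Hphi.
    rewrite Hsm eqxx (negbTE Hm).
    have := @bound_cop m (fun k => if k == m then tau k else Defs.lift (phi k)) s 1 Hm (b1 _ _ Hs).
    rewrite g1. lra.
  + have Hsm' : (s.2 == m) = false by apply/negbTE.
    rewrite (@L_capt1 m (fun n => Defs.lift (phi n)) s Hs Hc); try by (try unfold Defs.lift); rewrite /= ?Hnt ?Hr ?Hm' ?Hm0' ?Hphi /F ?eqxx ?c0_cop ?c1_cop ?cm_cop.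
    rewrite (@L_capt1 m (fun k => if k == m then tau k else Defs.lift (phi k)) s Hs Hc); try by (try unfold Defs.lift); rewrite /= Hsm' Hphi.
    rewrite (negbTE Hm) (eq_sym m) Hsm'.
    have := @bound_cop m (fun k => if k == m then Defs.lift (phi k) else tau k) s 0 Hm (fun t' H => False_ind _ (notF H)).
    lra.
Qed.

Lemma legal_any n (f : state V N -> V) : legal_pos e n f.
Proof. move=> s _ _; exact: adj_all. Qed.

Lemma b0 sg (s : state V N) : forall t', (t' < 0)%N -> ~~ capture (run sg s t').2.
Proof. by []. Qed.

Lemma opt_rob phi : (forall n s, phi n s = F s) -> optimal_pair e gamma 0 rob phi.
Proof.
move=> Hphi; split; first by move=> n; exact: legal_any.
move=> s Hs tau _.
have Gp := Hg0.
case: (eqVneq s.2 rob) => [Hr | Hnr].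
- have Hnt : next_tok s.2 = c0 by rewrite Hr next_tok_rob.
  have Hm0' : (c0 == rob) = false by apply/negbTE; exact: c0_nr.
  rewrite (@L_stay2 rob (fun n => Defs.lift (phi n)) s Hs); try by (try unfold Defs.lift); rewrite /= ?Hnt ?Hr ?Hphi /F ?c0_cop.
  rewrite eqxx.
  have Hst : (fun k => if k == rob then Defs.lift (phi k) else tau k) s.2 [::] s = s.1 s.2.
    by rewrite /= Hr (eqxx rob); unfold Defs.lift; rewrite Hphi.
  have := @bound_rob (fun k => if k == rob then Defs.lift (phi k) else tau k) s 2 (b2 _ _ Hs Hst).
  case: (eqVneq (tau rob [::] s) (s.1 rob)) => Ht.
  + rewrite (@L_stay2 rob (fun k => if k == rob then tau k else Defs.lift (phi k)) s Hs); try by (try unfold Defs.lift); rewrite /= ?Hnt ?Hr ?eqxx ?Hm0' ?Hphi /F ?c0_cop.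
    rewrite eqxx. lra.
  + rewrite (@L_jump rob (fun k => if k == rob then tau k else Defs.lift (phi k)) s Hs Hr); last by rewrite /= Hr eqxx.
    rewrite eqxx /=. nra.
- have Hc : is_cop s.2 by rewrite is_copE.
  have Hsm' : (s.2 == rob) = false by apply/negbTE.
  rewrite (@L_capt1 rob (fun n => Defs.lift (phi n)) s Hs Hc); try by (try unfold Defs.lift); rewrite /= Hphi.
  rewrite (@L_capt1 rob (fun k => if k == rob then tau k else Defs.lift (phi k)) s Hs Hc); try by (try unfold Defs.lift); rewrite /= Hsm' Hphi.
  rewrite eqxx.
  have := @bound_rob (fun k => if k == rob then Defs.lift (phi k) else tau k) s 1 (b1 _ _ Hs).
  rewrite g1. lra.
Qed.

Definition Rg (s : state V N) : V :=
  if Rle_dec gamma (/ INR (N - 1)) then s.1 rob else s.1 c0.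

Lemma opt_c0 phi : (forall n s, n != rob -> phi n s = F s) -> (forall s, phi rob s = Rg s) ->
  optimal_pair e gamma 0 c0 phi.
Proof.
move=> Hphi Hrob; split; first by move=> n; exact: legal_any.
move=> s Hs tau _.
have Gp := Hg0.
have Hm := c0_nr.
have Hm' : (rob == c0) = false by rewrite eq_sym (negbTE Hm).
have HINR : (0 < / INR (N - 1))%R by apply: Rinv_0_lt_compat; apply: INR_pos; lia.
case: (eqVneq s.2 rob) => [Hr | Hnr].
- have Hnt : next_tok s.2 = c0 by rewrite Hr next_tok_rob.
  have Hphi0 : forall x, phi c0 x = F x by move=> x; apply: Hphi.
  have Ec0 : s.1 c0 != s.1 rob by apply: noncapP => //; exact: c0_cop.
  have eO : payoff gamma 0 c0 (fun k => if k == c0 then Defs.lift (phi k) else tau k) s = (gamma ^ 2)%R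
    \/ payoff gamma 0 c0 (fun k => if k == c0 then Defs.lift (phi k) else tau k) s = (gamma * / INR (N - 1))%R.
    case: (eqVneq (tau rob [::] s) (s.1 rob)) => Ht.
    + left.
      rewrite (@L_stay2 c0 (fun k => if k == c0 then Defs.lift (phi k) else tau k) s Hs); try by (try unfold Defs.lift); rewrite /= ?Hnt ?Hr ?(eqxx c0) ?Hm' ?Hphi0 /F ?c0_cop.
      rewrite (negbTE Hm) Hnt (eqxx c0). lra.
    + right.
      rewrite (@L_jump c0 (fun k => if k == c0 then Defs.lift (phi k) else tau k) s Hs Hr); last by rewrite /= Hr Hm'.
      by rewrite (negbTE Hm).
  have g2 : (gamma ^ 2 = gamma * gamma)%R by rewrite /= Rmult_1_r.
  case: (Rle_dec gamma (/ INR (N - 1))) => Hle.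
  + have HRg : forall x, Rg x = x.1 rob by move=> x; rewrite /Rg; case: Rle_dec.
    rewrite (@L_stay2 c0 (fun n => Defs.lift (phi n)) s Hs); try by (try unfold Defs.lift); rewrite /= ?Hnt ?Hr ?Hrob ?HRg ?Hphi0 /F ?c0_cop.
    have Hst : (fun k => if k == c0 then tau k else Defs.lift (phi k)) s.2 [::] s = s.1 s.2.
      by rewrite /= Hr Hm'; unfold Defs.lift; rewrite Hrob HRg.
    have := @bound_cop c0 (fun k => if k == c0 then tau k else Defs.lift (phi k)) s 2 Hm (b2 _ _ Hs Hst).
    rewrite (negbTE Hm) Hnt (eqxx c0).
    have : (gamma * gamma <= gamma * / INR (N - 1))%R by nra.
    case: eO => ->; lra.
  + have HRg : forall x, Rg x = x.1 c0 by move=> x; rewrite /Rg; case: Rle_dec.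
    have Hle' : (/ INR (N - 1) < gamma)%R by apply: Rnot_le_lt.
    have Hj : s.1 c0 != s.1 rob by apply: noncapP => //; exact: c0_cop.
    rewrite (@L_jump c0 (fun n => Defs.lift (phi n)) s Hs Hr); last by (try unfold Defs.lift); rewrite /= Hr Hrob HRg.
    rewrite (@L_jump c0 (fun k => if k == c0 then tau k else Defs.lift (phi k)) s Hs Hr); last by (try unfold Defs.lift); rewrite /= Hr Hm' Hrob HRg.
    rewrite (negbTE Hm).
    have : (gamma * / INR (N - 1) <= gamma * gamma)%R by nra.
    case: eO => ->; lra.
- have Hc : is_cop s.2 by rewrite is_copE.
  have HphiS : forall x, phi s.2 x = F x by move=> x; apply: Hphi.
  case: (eqVneq s.2 c0) => [Hsm | Hsm].
  + rewrite (@L_capt1 c0 (fun n => Defs.lift (phi n)) s Hs Hc); try by (try unfold Defs.lift); rewrite /= HphiS.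
    rewrite (@L_capt1 c0 (fun k => if k == c0 then Defs.lift (phi k) else tau k) s Hs Hc); try by (try unfold Defs.lift); rewrite /= Hsm (eqxx c0) -Hsm HphiS.
    rewrite Hsm (eqxx c0) (negbTE Hm).
    have := @bound_cop c0 (fun k => if k == c0 then tau k else Defs.lift (phi k)) s 1 Hm (b1 _ _ Hs).
    rewrite g1. lra.
  + have Hsm' : (s.2 == c0) = false by apply/negbTE.
    rewrite (@L_capt1 c0 (fun n => Defs.lift (phi n)) s Hs Hc); try by (try unfold Defs.lift); rewrite /= HphiS.
    rewrite (@L_capt1 c0 (fun k => if k == c0 then tau k else Defs.lift (phi k)) s Hs Hc); try by (try unfold Defs.lift); rewrite /= Hsm' HphiS.
    rewrite (negbTE Hm) (eq_sym c0) Hsm'.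
    have := @bound_cop c0 (fun k => if k == c0 then Defs.lift (phi k) else tau k) s 0 Hm (b0 _ _).
    lra.
Qed.

Lemma Z_psi (phi : 'I_N -> state V N -> V) (sg : 'I_N -> strategy V N) (s : state V N) :
  (forall x, phi c0 x = Sst x) -> (forall n x, n != c0 -> phi n x = F x) ->
  (forall n h x, n != cm -> sg n h x = phi n x) -> ~~ capture s -> s.2 != cm ->
  payoff gamma 0 cm sg s = 0%R.
Proof.
move=> H0 Hphi Hsg Hs Hn.
have cmr : (cm == rob) = false by apply/negbTE; exact: cm_nr.
have cm1' : (cm == c1) = false by apply/negbTE; exact: cm1.
have c1c0 : c1 != c0 by rewrite eq_sym c01.
have c1cm : c1 != cm by rewrite eq_sym cm1.
have c0cm : c0 != cm by rewrite eq_sym cm0.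
have rc0 : rob != c0 by rewrite eq_sym c0_nr.
have rcm : rob != cm by rewrite eq_sym cm_nr.
case: (eqVneq s.2 rob) => [Hr | Hnr].
- have Hnt : next_tok s.2 = c0 by rewrite Hr next_tok_rob.
  rewrite (@L_stay3 cm sg s Hs); try by [rewrite Hnt next_c0 cmr cm1' Rmult_0_r
    | rewrite Hsg Hr // Hphi | rewrite Hnt Hsg // H0 | rewrite Hnt next_c0 c1_cop
    | rewrite Hnt next_c0 Hsg // Hphi].
- case: (eqVneq s.2 c0) => [H0s | H0s].
  + rewrite (@L_stay2 cm sg s Hs); try by [rewrite H0s next_c0 cmr cm1' Rmult_0_r
      | rewrite Hsg // H0s H0 /Sst H0s | rewrite H0s next_c0 c1_cop | rewrite H0s next_c0 Hsg // Hphi].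
  + have Hc : is_cop s.2 by rewrite is_copE.
    rewrite (@L_capt1 cm sg s Hs Hc); try by [rewrite cmr (eq_sym cm) (negbTE Hn) Rmult_0_r
      | rewrite Hsg // Hphi].
Qed.

Lemma opt_psi phi : (forall x, phi c0 x = Sst x) -> (forall n x, n != c0 -> phi n x = F x) ->
  optimal_pair e gamma 0 cm phi.
Proof.
move=> H0 Hphi; split; first by move=> n; exact: legal_any.
move=> s Hs tau _.
have Gp := Hg0.
have Hm := cm_nr.
case: (eqVneq s.2 cm) => [Hsm | Hsm].
- have Hc : is_cop s.2 by rewrite Hsm cm_cop.
  have Hcm : forall x, phi cm x = F x by move=> x; apply: Hphi; exact: cm0.
  rewrite (@L_capt1 cm (fun n => Defs.lift (phi n)) s Hs Hc); try by (try unfold Defs.lift); rewrite /= Hsm Hcm.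
  rewrite (@L_capt1 cm (fun k => if k == cm then Defs.lift (phi k) else tau k) s Hs Hc); try by (try unfold Defs.lift); rewrite /= Hsm (eqxx cm) Hcm.
  rewrite Hsm (eqxx cm) (negbTE Hm).
  have := @bound_cop cm (fun k => if k == cm then tau k else Defs.lift (phi k)) s 1 Hm (b1 _ _ Hs).
  rewrite g1. lra.
- rewrite (@Z_psi phi (fun n => Defs.lift (phi n)) s H0 Hphi) //.
  rewrite (@Z_psi phi (fun k => if k == cm then tau k else Defs.lift (phi k)) s H0 Hphi) //; last first.
    by move=> n h x Hn /=; rewrite (negbTE Hn).
  have := @bound_cop cm (fun k => if k == cm then Defs.lift (phi k) else tau k) s 0 Hm (b0 _ _).
  lra.
Qed.

Lemma CR_F n : CR_optimal e gamma 0 n F.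
Proof.
exists rob, (fun _ => F); split; first by rewrite is_robberE.
split => //; exact: opt_rob.
Qed.

Lemma legal_strat_any n (t : strategy V N) : legal_strat e n t.
Proof. move=> p s _ _; exact: adj_all. Qed.

Lemma CR_robber (r : 'I_N) : is_robber r -> r = rob.
Proof. by rewrite is_robberE => /eqP. Qed.

Lemma CR_cop n f (s : state V N) : CR_optimal e gamma 0 n f -> is_cop n ->
  ~~ capture s -> s.2 = n -> f s = s.1 rob.
Proof.
move=> [r [psi [Hr [[_ Hopt] Hpsi]]]] Hn Hs Hsn.
move: Hopt; rewrite (CR_robber _ Hr) => Hopt.
have Gp := Hg0.
have [_ H2] := Hopt s Hs (fun _ => Defs.lift F) (fun n => legal_strat_any n _).
have Hnr : n != rob by rewrite -is_copE.
have Hc : is_cop s.2 by rewrite Hsn.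
move: H2; rewrite (@L_capt1 rob (fun k => if k == rob then Defs.lift (psi k) else Defs.lift F) s Hs Hc); last first.
  by rewrite /= Hsn (negbTE Hnr).
rewrite (eqxx rob) => H2.
have Hd : s.1 s.2 != s.1 rob by apply: noncapP.
case: (@two3 _ _ (f s) Hd) => // E.
have Hst : (fun k => Defs.lift (psi k)) s.2 [::] s = s.1 s.2 by rewrite /Defs.lift /= Hsn Hpsi -Hsn.
have := @bound_rob (fun k => Defs.lift (psi k)) s 2 (b2 _ _ Hs Hst).
rewrite /= Rmult_1_r. nra.
Qed.

Lemma CR_rob f (s : state V N) : CR_optimal e gamma 0 rob f ->
  ~~ capture s -> s.2 = rob -> f s = s.1 rob.
Proof.
move=> [r [psi [Hr [[_ Hopt] Hpsi]]]] Hs Hsn.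
move: Hopt; rewrite (CR_robber _ Hr) => Hopt.
have Gp := Hg0.
have [H1 _] := Hopt s Hs (fun _ => Defs.lift Sst) (fun n => legal_strat_any n _).
have Hst : (fun k => if k == rob then Defs.lift Sst else Defs.lift (psi k)) s.2 [::] s = s.1 s.2.
  by rewrite /Defs.lift /Sst /= Hsn (eqxx rob) /= Hsn.
have := @bound_rob (fun k => if k == rob then Defs.lift Sst else Defs.lift (psi k)) s 2 (b2 _ _ Hs Hst).
case: (eqVneq (f s) (s.1 rob)) => // Hj.
move: H1; rewrite (@L_jump rob (fun k => Defs.lift (psi k)) s Hs Hsn); last first.
  by rewrite /Defs.lift /= Hsn Hpsi.
rewrite (eqxx rob) /= Rmult_1_r. nra.
Qed.

Variable s0 : state V N.
Hypothesis Hs0 : ~~ capture s0.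

Lemma walk (p : {ffun 'I_N -> V}) : (forall k, ~~ capture (p, k)) ->
  forall d (i j : 'I_N), (val i + d = val j)%N -> reachable e s0 (p, i) -> reachable e s0 (p, j).
Proof.
move=> Hp; elim => [|d IH] i j Hd R.
  by have <- : i = j by apply: val_inj; rewrite -Hd addn0.
have Hi : (val i < N.-1)%N by move: Hd; rewrite /=; have := ltn_ord j; lia.
apply: (IH (next_tok i)); first by rewrite next_tok_lt //; move: Hd; rewrite /=; lia.
have := reachS R (Hp i) (adj_all (p i) (p i)).
by rewrite (step_stay (p, i)).
Qed.

Lemma reach_all j : reachable e s0 (s0.1, j).
Proof.
have Hp : forall k, ~~ capture (s0.1, k) by move=> k; exact: (noncap_pos s0 k Hs0).
have R0 : reachable e s0 (s0.1, s0.2) by rewrite -surjective_pairing; exact: reach0.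
have R1 : reachable e s0 (s0.1, rob).
  apply: (@walk s0.1 Hp (N.-1 - val s0.2) s0.2 rob); last exact: R0.
  rewrite /=; have := ltn_ord s0.2; lia.
have R2 : reachable e s0 (s0.1, c0).
  have := reachS R1 (Hp rob) (adj_all (s0.1 rob) (s0.1 rob)).
  by rewrite (step_stay (s0.1, rob)) /= next_tok_rob.
by apply: (@walk s0.1 Hp (val j) c0 j).
Qed.

Definition phi1 (m : 'I_N) : 'I_N -> state V N -> V :=
  if m == cm then (fun n => if n == c0 then Sst else F)
  else if m == c0 then (fun n => if n == rob then Rg else F)
  else (fun _ => F).

Definition phi2 (m : 'I_N) : 'I_N -> state V N -> V :=
  if m == c0 then (fun n => if n == rob then Rg else F)
  else (fun _ => F).

Lemma tc_phi1 : trigger_choice e gamma 0 phi1.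
Proof.
move=> m; rewrite /phi1.
case: (eqVneq m cm) => [->|Hmc].
  apply: opt_psi => [x|n x Hn]; first by rewrite (eqxx c0).
  by rewrite (negbTE Hn).
case: (eqVneq m c0) => [->|Hm0].
  apply: opt_c0 => [n x Hn|x]; first by rewrite (negbTE Hn).
  by rewrite (eqxx rob).
case: (eqVneq m rob) => [->|Hmr]; first exact: opt_rob.
exact: opt_cop_stay.
Qed.

Lemma part1 : exists phi, trigger_choice e gamma 0 phi /\ ~ positional_trigger e gamma 0 s0 phi.
Proof.
exists phi1; split; first exact: tc_phi1.
move=> Hpos; have [f [Hf Hag]] := Hpos c0 cm.
have Hnc : ~~ capture (s0.1, c0) by apply: noncap_pos.
have := Hag (s0.1, c0) (reach_all c0) (erefl _) Hnc.
rewrite /phi1 (eqxx cm) (eqxx c0) (CR_cop _ _ _ Hf c0_cop Hnc (erefl _)) /Sst /= => E.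
have := noncapP _ c0 Hs0 c0_cop. by rewrite E eqxx.
Qed.

Lemma part2 : (exists phi, trigger_choice e gamma 0 phi /\ positional_trigger e gamma 0 s0 phi)
  <-> (gamma <= / INR (N - 1))%R.
Proof.
split.
- move=> [phi [Htc Hpos]].
  have [f [Hf Hag]] := Hpos rob c0.
  have Hnc : ~~ capture (s0.1, rob) by apply: noncap_pos.
  have Hst := Hag (s0.1, rob) (reach_all rob) (erefl _) Hnc.
  rewrite (CR_rob _ _ Hf Hnc (erefl _)) /= in Hst.
  have [_ Hopt] := Htc c0.
  set J : state V N -> V := fun x => x.1 c0.
  set tau : 'I_N -> strategy V N := fun k => if k == c0 then Defs.lift F else Defs.lift J.
  have [H1 H2] := Hopt (s0.1, rob) Hnc tau (fun n => legal_strat_any n _).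
  have Hm := c0_nr.
  have Hm' : (rob == c0) = false by rewrite eq_sym (negbTE Hm).
  move: H1; rewrite (@L_stay2 c0 (fun k => if k == c0 then tau k else Defs.lift (phi c0 k)) (s0.1, rob) Hnc); first last.
  + by rewrite /= next_tok_rob (eqxx c0) /tau (eqxx c0).
  + by rewrite /= next_tok_rob c0_cop.
  + by rewrite /= Hm' /Defs.lift Hst.
  rewrite (negbTE Hm) /= next_tok_rob (eqxx c0) => H1.
  move: H2; rewrite (@L_jump c0 (fun k => if k == c0 then Defs.lift (phi c0 k) else tau k) (s0.1, rob) Hnc); first last.
  + rewrite /= Hm' /tau Hm' /Defs.lift /J /=.
    exact: (noncapP _ c0 Hnc c0_cop).
  + by [].
  rewrite (negbTE Hm) => H2.
  have Gp := Hg0.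
  have : (gamma * gamma <= gamma * / INR (N - 1))%R by rewrite Rmult_1_r in H1; lra.
  move=> H; apply: (Rmult_le_reg_l gamma) => //; lra.
- move=> Hle.
  have HRg : forall x, Rg x = x.1 rob by move=> x; rewrite /Rg; case: Rle_dec.
  exists phi2; split.
  + move=> m; rewrite /phi2.
    case: (eqVneq m c0) => [->|Hm0].
      apply: opt_c0 => [n x Hn|x]; first by rewrite (negbTE Hn).
      by rewrite (eqxx rob).
    case: (eqVneq m rob) => [->|Hmr]; first exact: opt_rob.
    exact: opt_cop_stay.
  + move=> n m; exists F; split; first exact: CR_F.
    move=> s _ _ _; rewrite /phi2; case: (m == c0) => //.
    by case: (n == rob) => //; rewrite HRg.
Qed.
End SEC.

Theorem mainTheorem3
  (V : finType) (e : rel V)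
  (e_sym : symmetric e) (e_irr : irreflexive e)
  (G_conn : forall x y : V, connect e x y)
  (V2 : #|V| = 2%N)
  (N : nat) (HN : (3 < N)%N)
  (s0 : state V N) (Hs0 : ~~ capture s0) :
  (forall gamma : R, (0 < gamma < 1)%R ->
     exists phi, trigger_choice e gamma 0%R phi /\ ~ positional_trigger e gamma 0%R s0 phi)
  /\
  (forall gamma : R, (0 < gamma < 1)%R ->
     ((exists phi, trigger_choice e gamma 0%R phi /\ positional_trigger e gamma 0%R s0 phi)
      <-> (gamma <= / INR (N - 1))%R)).
Proof.
split => gamma [Hg0 Hg1].
- exact: (@part1 V e N V2 HN e_irr G_conn gamma Hg0 Hg1 s0 Hs0).
- exact: (@part2 V e N V2 HN e_irr G_conn gamma Hg0 Hg1 s0 Hs0).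
Qed.
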